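(* Let $q\ge 1$ and $n\ge 0$ be integers, let $a_1,\dots,a_n\in\mathbb{Z}_q$ be reduced residues (i.e. $\gcd(a_i,q)=1$ for all $i$), and let $P\subseteq\mathbb{Z}_q$ with $|P|=k$. Then the number of the $2^n$ choices $(\varepsilon_1,\dots,\varepsilon_n)\in\{0,1\}^n$ for which $\sum_{i=1}^n\varepsilon_i a_i \in P$ is at most $$\sum_{\substack{j\in\mathbb{Z}\\ (n-k)/2\le j<(n+k)/2}}\binom{n}{j}_q .$$ Moreover, this bound is best possible: for all such $q,n,k$ there exist reduced residues $a_1,\dots,a_n$ and a set $P\subseteq\mathbb{Z}_q$ with $|P|=k$ for which equality holds.
   Context: $\mathbb{Z}_q$ denotes the additive group of integers modulo $q$. For an integer $s$, the mod $q$ binomial coefficient is $\binom{n}{s}_q=|\{A\subseteq\{1,\dots,n\}: |A|\equiv s \pmod q\}|=\sum_{j\equiv s \ (\mathrm{mod}\ q),\,0\le j\le n}\binom{n}{j}$. The sum in the claim is the sum of the $k$ ''middle'' mod $q$ binomial coefficients in $n$. *)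

(* Defs.v *)
From mathcomp Require Import all_boot all_order all_algebra.
Set Implicit Arguments. Unset Strict Implicit. Unset Printing Implicit Defensive.
Import GRing.Theory Num.Theory.

(* Z_q is represented by 'I_q (residues 0..q-1), q >= 1; addition mod q. *)

Definition binom_mod (q n : nat) (s : int) : nat :=
  \sum_(0 <= j < n.+1 | (q%:Z %| (j%:Z - s)%R)%Z) 'C(n, j).

(* Every such j lies in
   [-k, n+k], so j is written j = t - k with 0 <= t <= n + 2k. *)
Definition middle_binom_sum (q n k : nat) : nat :=
  \sum_(0 <= t < (n + 2 * k).+1
         | ((n%:Z - k%:Z <= 2%:Z * (t%:Z - k%:Z))
            && (2%:Z * (t%:Z - k%:Z) < n%:Z + k%:Z))%R)
     binom_mod q n (t%:Z - k%:Z)%R.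

Definition signed_sum (q n : nat) (a : 'I_n -> 'I_q) (e : {ffun 'I_n -> bool}) : nat :=
  (\sum_(i < n) e i * a i) %% q.

Definition hit_count (q n : nat) (a : 'I_n -> 'I_q) (P : {set 'I_q}) : nat :=
  #|[set e : {ffun 'I_n -> bool} | [exists p in P, signed_sum a e == nat_of_ord p]]|.

(* Main.v *)
Require Import Defs.
From mathcomp Require Import all_boot all_order all_algebra zify.
Set Implicit Arguments. Unset Strict Implicit. Unset Printing Implicit Defensive.
Import GRing.Theory Num.Theory.

Lemma bm_period q n (s t : int) : (q%:Z %| (s - t)%R)%Z -> binom_mod q n s = binom_mod q n t.
Proof.
move=> H; apply: eq_bigl => j.
have -> : (j%:Z - s = (j%:Z - t) - (s - t))%R by lia.
by rewrite rpredBr.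
Qed.

Lemma bm_sym q n (s : int) : binom_mod q n s = binom_mod q n (n%:Z - s)%R.
Proof.
rewrite /binom_mod !(big_mkcond (fun j => _ %| _)%Z) big_nat_rev /=.
apply: eq_big_nat => j /andP[_ hj].
have -> : (0 + n.+1 - j.+1 = n - j)%N by lia.
rewrite bin_sub; last by lia.
have -> : ((n - j)%N%:Z - s = - (j%:Z - (n%:Z - s)))%R by lia.
by rewrite rpredN.
Qed.

Lemma bm_pascal q n (s : int) : binom_mod q n.+1 s = binom_mod q n s + binom_mod q n (s - 1)%R.
Proof.
rewrite /binom_mod !(big_mkcond (fun j => _ %| _)%Z).
rewrite big_nat_recl // [in X in _ = X + _]big_nat_recl //.
rewrite /=.
have -> : \sum_(0 <= i < n) (if (q%:Z %| (i.+1%:Z - s)%R)%Z then 'C(n, i.+1) else 0)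
  = \sum_(0 <= i < n.+1) (if (q%:Z %| (i.+1%:Z - s)%R)%Z then 'C(n, i.+1) else 0).
  by rewrite big_nat_recr //= bin_small // if_same addn0.
rewrite !bin0 -addnA; congr (_ + _); rewrite -big_split /=.
apply: eq_big_nat => j _.
have -> : ((j.+1)%:Z - s = j%:Z - (s - 1))%R by lia.
by rewrite binS; case: ifP.
Qed.

Lemma bm0 q (s : int) : binom_mod q 0 s = if (q%:Z %| s)%Z then 1 else 0.
Proof.
rewrite /binom_mod big_mkcond big_nat1 bin0 /=.
by rewrite (_ : (0%:Z - s = - s)%R) ?rpredN //; lia.
Qed.

Lemma bm_dist q n (x y : int) : `|2 * x - n%:Z|%R = `|2 * y - n%:Z|%R ->
  binom_mod q n x = binom_mod q n y.
Proof.
move=> h; case: (x =P y) => [-> //|nxy].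
rewrite (bm_sym q n y); congr binom_mod; lia.
Qed.

Lemma bm_shift q n (x : int) : binom_mod q n (x - q%:Z)%R = binom_mod q n x.
Proof.
apply: bm_period; rewrite (_ : (x - q%:Z - x = - q%:Z)%R) ?rpredN ?dvdzz //; lia.
Qed.

Lemma bm_mono q n : (0 < q)%N -> forall x y : int,
  (`|2 * x - n%:Z| <= `|2 * y - n%:Z|)%R -> (`|2 * y - n%:Z| <= q%:Z)%R ->
  (binom_mod q n y <= binom_mod q n x)%N.
Proof.
move=> q0; elim: n => [|n IH] x y hxy hy.
  rewrite !bm0; case: ifP => // /dvdzP [z hz].
  have z0 : z = 0%R.
    case: (ltrgtP z 0) => // hz0.
      have : (z * q%:Z <= - q%:Z)%R by nia.
      lia.
    have : (q%:Z <= z * q%:Z)%R by nia.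
    lia.
  have -> : x = 0%R by lia.
  by rewrite dvdz0.
have [x1 hx1] : exists x1 : int, (2 * x1 - n.+1%:Z = `|2 * x - n.+1%:Z|)%R.
  by case: (lerP 0 (2 * x - n.+1%:Z))%R => h; [exists x | exists (n.+1%:Z - x)%R]; lia.
have [y1 hy1] : exists y1 : int, (2 * y1 - n.+1%:Z = `|2 * y - n.+1%:Z|)%R.
  by case: (lerP 0 (2 * y - n.+1%:Z))%R => h; [exists y | exists (n.+1%:Z - y)%R]; lia.
rewrite (@bm_dist q n.+1 x x1); last by lia.
rewrite (@bm_dist q n.+1 y y1); last by lia.
rewrite !bm_pascal.
case: (x1 =P y1) => [-> //|nxy].
case: (lerP (2 * y1 - n.+1%:Z + 1) q%:Z)%R => hv.
  apply: leq_add; apply: IH; lia.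
rewrite -(bm_shift q n y1).
apply: leq_add; apply: IH; lia.
Qed.

Definition J (n k : nat) : int :=
  if odd (n + k) then (((n + k)%N./2)%:Z - k%:Z)%R else (((n + k)%N./2)%:Z)%R.

Lemma JP n k : (2 * J n k - n%:Z = k%:Z)%R \/ (2 * J n k - n%:Z = - (k%:Z + 1))%R.
Proof.
rewrite /J; have := odd_double_half (n + k).
by case: (odd (n + k)) => /= h; [right|left]; lia.
Qed.

Lemma F0 q n : middle_binom_sum q n 0 = 0.
Proof. by rewrite /middle_binom_sum big1 // => t /andP[h1 h2]; lia. Qed.

Lemma Fstep q n k : middle_binom_sum q n k.+1 =
  middle_binom_sum q n k + binom_mod q n (J n k).
Proof.
rewrite /middle_binom_sum !(big_mkcond (fun t => (_ <= _)%R && _)).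
have -> : (n + 2 * k.+1 = (n + 2 * k).+2)%N by lia.
rewrite big_nat_recl // big_nat_recr //=.
rewrite [X in X + (_ + _) = _]ifF; last by apply/negbTE/negP => /andP[h1 h2]; lia.
rewrite [X in _ + (_ + X) = _]ifF; last by apply/negbTE/negP => /andP[h1 h2]; lia.
rewrite add0n addn0.
pose t0 := ((n + k)./2 + (if odd (n + k) then 0 else k))%N.
have ht0 : (t0 < (n + 2 * k).+1)%N.
  by rewrite /t0; have := odd_double_half (n + k); case: (odd (n + k)) => /= h; lia.
have hJ : J n k = (t0%:Z - k%:Z)%R.
  by rewrite /t0 /J; have := odd_double_half (n + k); case: (odd (n + k)) => /= h; lia.
have -> : binom_mod q n (J n k) =
   \sum_(0 <= t < (n + 2 * k).+1 | t == t0) binom_mod q n (t%:Z - k%:Z)%R.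
  by rewrite big_nat1_eq ht0 hJ.
rewrite [X in _ = _ + X]big_mkcond /=.
rewrite -big_split /=.
apply: eq_big_nat => i _.
rewrite (_ : (i.+1%:Z - k.+1%:Z = i%:Z - k%:Z)%R); last by lia.
have := odd_double_half (n + k); rewrite /t0.
case: (odd (n + k)) => /= hh;
  case: ifP => [/andP[h1 h2]|/negbT/negP h1]; case: ifP => [/andP[h3 h4]|/negbT/negP h3];
   case: eqP => h5 //=; try lia.
Qed.

Lemma Fpascal q n k : middle_binom_sum q n.+1 k.+1 =
  middle_binom_sum q n k.+2 + middle_binom_sum q n k.
Proof.
elim: k => [|k IH].
  rewrite !Fstep !F0 bm_pascal.
  have := JP n 0; have := JP n 1; case: (JP n.+1 0) => h h1 h0.
    rewrite (@bm_dist q n (J n.+1 0) (J n 1)); last by lia.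
    rewrite (@bm_dist q n (J n.+1 0 - 1)%R (J n 0)); last by lia.
    lia.
  rewrite (@bm_dist q n (J n.+1 0) (J n 0)); last by lia.
  rewrite (@bm_dist q n (J n.+1 0 - 1)%R (J n 1)); last by lia.
  lia.
rewrite Fstep IH (Fstep q n k.+2) (Fstep q n k) bm_pascal.
have := JP n k; have := JP n k.+2; case: (JP n.+1 k.+1) => h h1 h0.
  rewrite (@bm_dist q n (J n.+1 k.+1) (J n k.+2)); last by lia.
  rewrite (@bm_dist q n (J n.+1 k.+1 - 1)%R (J n k)); last by lia.
  lia.
rewrite (@bm_dist q n (J n.+1 k.+1) (J n k)); last by lia.
rewrite (@bm_dist q n (J n.+1 k.+1 - 1)%R (J n k.+2)); last by lia.
lia.
Qed.

Lemma Fconc1 q n x y : (0 < q)%N -> (x <= y)%N -> (y < q)%N ->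
  (middle_binom_sum q n y.+1 + middle_binom_sum q n x <=
   middle_binom_sum q n y + middle_binom_sum q n x.+1)%N.
Proof.
move=> q0 xy yq; rewrite !Fstep.
have : (binom_mod q n (J n y) <= binom_mod q n (J n x))%N.
  by apply: bm_mono => //; have := JP n x; have := JP n y; lia.
lia.
Qed.

Lemma Fconc q n k j : (0 < q)%N -> (j < k)%N -> (k + j < q)%N ->
  (middle_binom_sum q n (k + 1 + j) + middle_binom_sum q n (k - 1 - j) <=
   middle_binom_sum q n (k + 1) + middle_binom_sum q n (k - 1))%N.
Proof.
move=> q0; elim: j => [|j IH] jk kjq; first by rewrite !addn0 !subn0.
apply: (leq_trans _ (IH _ _)); try lia.
have -> : (k + 1 + j.+1 = (k + 1 + j).+1)%N by lia.
have -> : (k - 1 - j = (k - 1 - j.+1).+1)%N by lia.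
apply: Fconc1 => //; lia.
Qed.

Lemma Ftop q n : (0 < q)%N ->
  (middle_binom_sum q n q + middle_binom_sum q n q <= middle_binom_sum q n.+1 q)%N.
Proof.
case: q => // q _; rewrite Fpascal (Fstep _ n q.+1) (Fstep _ n q).
suff : (binom_mod q.+1 n (J n q) <= binom_mod q.+1 n (J n q.+1))%N by lia.
have := JP n q; case: (JP n q.+1) => h h0.
  by apply: bm_mono => //; lia.
have -> : binom_mod q.+1 n (J n q.+1) = binom_mod q.+1 n (J n q.+1 + q.+1%:Z)%R.
  by rewrite -(bm_shift q.+1 n (J n q.+1 + q.+1%:Z)%R) addrK.
by apply: bm_mono => //; lia.
Qed.

Definition ext n (e : {ffun 'I_n -> bool}) (b : bool) : {ffun 'I_n.+1 -> bool} :=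
  [ffun i => if unlift ord_max i is Some j then e j else b].
Definition restr n (e : {ffun 'I_n.+1 -> bool}) : {ffun 'I_n -> bool} :=
  [ffun j => e (lift ord_max j)].

Lemma restr_ext n e b : restr (@ext n e b) = e.
Proof. by apply/ffunP => j; rewrite !ffunE liftK. Qed.

Lemma ext_max n e b : @ext n e b ord_max = b.
Proof. by rewrite ffunE unlift_none. Qed.

Lemma ext_restr n (e : {ffun 'I_n.+1 -> bool}) : ext (restr e) (e ord_max) = e.
Proof.
apply/ffunP => i; rewrite !ffunE; case: unliftP => [j ->|-> //].
by rewrite ffunE.
Qed.

Lemma sum_ffunS n (F : {ffun 'I_n.+1 -> bool} -> nat) :
  \sum_e F e = \sum_(e : {ffun 'I_n -> bool}) (F (ext e false) + F (ext e true)).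
Proof.
rewrite big_split /= (bigID (fun e : {ffun 'I_n.+1 -> bool} => e ord_max)) /= addnC.
congr (_ + _).
  rewrite (reindex_onto (fun e => ext e false) (@restr n)) /=.
    by apply: eq_bigl => e; rewrite ext_max restr_ext eqxx.
  by move=> e /negbTE he; rewrite -{2}(ext_restr e) he.
rewrite (reindex_onto (fun e => ext e true) (@restr n)) /=.
  by apply: eq_bigl => e; rewrite ext_max restr_ext eqxx.
by move=> e he; rewrite -{2}(ext_restr e) he.
Qed.

Lemma ss_ext q n (a : 'I_n.+1 -> 'I_q) e b :
  signed_sum a (ext e b) =
  ((\sum_(i < n) e i * a (lift ord_max i)) + b * a ord_max) %% q.
Proof.
rewrite /signed_sum big_ord_recr /= ext_max; congr ((_ + _) %% q).
apply: eq_bigr => i _.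
have -> : widen_ord (leqnSn n) i = lift ord_max i by apply: val_inj; rewrite /= /bump leqNgt ltn_ord.
by rewrite ffunE liftK.
Qed.

Definition hc q n (a : 'I_n -> 'I_q) (x : 'I_q) : nat :=
  \sum_(e : {ffun 'I_n -> bool}) (signed_sum a e == x).

Lemma sum_eqx q (P : {set 'I_q}) s (hs : s < q) :
  \sum_(x in P) (s == x :> nat) = (Ordinal hs \in P).
Proof.
case: (boolP (Ordinal hs \in P)) => hin.
  rewrite (bigD1 _ hin) /= eqxx big1 // => x /andP[_ hx].
  by case: eqP => // e; move: hx; rewrite (_ : Ordinal hs = x) ?eqxx //; apply: val_inj.
apply: big1 => x hx; case: eqP => // e.
by move: hin; rewrite (_ : Ordinal hs = x) ?hx //; apply: val_inj.
Qed.

Lemma hit_hc q n (a : 'I_n -> 'I_q) P : 0 < q ->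
  hit_count a P = \sum_(x in P) hc a x.
Proof.
move=> q0; rewrite /hit_count /hc exchange_big /= -sum1_card big_mkcond /=.
apply: eq_bigr => e _; rewrite inE.
have hs : signed_sum a e < q by apply: ltn_pmod.
rewrite sum_eqx.
have -> : [exists p in P, signed_sum a e == p] = (Ordinal hs \in P).
  apply/existsP/idP => [[x /andP[hx /eqP ex]]|hin].
    by rewrite (_ : Ordinal hs = x) ?hx //; apply: val_inj.
  by exists (Ordinal hs); rewrite hin /=.
by case: (Ordinal hs \in P).
Qed.

Lemma zp_addE p (y z x : 'I_p.+1) : ((y + z) %% p.+1 == x) = (y == x - z)%R.
Proof.
have -> : ((y + z) %% p.+1 = val (y + z)%R)%N by [].
by rewrite val_eqE [in RHS]eq_sym subr_eq eq_sym.
Qed.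

Lemma hc_rec p n (a : 'I_n.+1 -> 'I_p.+1) x :
  hc a x = hc (fun i => a (lift ord_max i)) x + hc (fun i => a (lift ord_max i)) (x - a ord_max)%R.
Proof.
rewrite /hc sum_ffunS big_split /=; congr (_ + _); apply: eq_bigr => e _; rewrite ss_ext.
  by rewrite mul0n addn0.
rewrite mul1n /signed_sum -modnDml.
set S := \sum_(i < n) _.
have -> : (S %% p.+1 = val (inZp S : 'I_p.+1))%N by [].
by rewrite zp_addE.
Qed.

Lemma sumUI (T : finType) (f : T -> nat) (A B : {set T}) :
  \sum_(x in A) f x + \sum_(x in B) f x =
  \sum_(x in A :|: B) f x + \sum_(x in A :&: B) f x.
Proof.
rewrite !(big_mkcond (fun x => x \in _)) -!big_split; apply: eq_bigr => x _.
by rewrite !inE; case: (x \in A); case: (x \in B) => //=; rewrite addn0.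
Qed.

Lemma sum_shift p (h : 'I_p.+1 -> nat) (P : {set 'I_p.+1}) (al : 'I_p.+1) :
  \sum_(x in P) h (x - al)%R = \sum_(y in (fun y => y + al)%R @^-1: P) h y.
Proof.
rewrite (reindex_inj (addIr al)) /=; apply: eq_big => y; first by rewrite inE.
by rewrite addrK.
Qed.

Lemma bezout_mod a m : coprime a m -> exists u, (a * u) %% m = 1 %% m.
Proof.
case: (posnP a) => [->|a0].
  by rewrite /coprime gcd0n => /eqP ->; exists 0.
move=> co; case: (egcdnP m a0) => km kn h _; exists km.
by rewrite mulnC h (eqP co) modnMDl.
Qed.

Lemma inv_full p (P : {set 'I_p.+1}) (al : 'I_p.+1) : coprime al p.+1 ->
  (fun y => y + al)%R @^-1: P = P -> P != set0 -> P = setT.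
Proof.
move=> co E /set0Pn [y0 hy0].
have step y : y \in P -> (y + al)%R \in P by rewrite -{1}E inE.
have iter j y : y \in P -> (y + al *+ j)%R \in P.
  elim: j => [|j IH] hy; first by rewrite mulr0n addr0.
  by rewrite mulrSr addrA; apply: step; apply: IH.
apply/setP => z; rewrite inE; apply/idP.
have [u hu] := bezout_mod co.
have -> : z = (y0 + al *+ (u * val (z - y0)%R))%R.
  have -> : (al *+ (u * val (z - y0)%R) = z - y0)%R.
    apply: val_inj; rewrite Zp_mulrn /= mulnA -modnMml hu modnMml mul1n.
    by rewrite modn_mod.
  by rewrite [RHS]addrC subrK.
exact: iter.
Qed.

Lemma Fmono q n k d : middle_binom_sum q n k <= middle_binom_sum q n (d + k).
Proof. by elim: d => // d IH; rewrite addSn Fstep (leq_trans IH) ?leq_addr. Qed.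

Lemma F01 q : middle_binom_sum q.+1 0 1 = 1.
Proof. by rewrite Fstep F0 bm0 /J /=. Qed.

Lemma Fnum q n u v k : 0 < q -> u + v = k + k -> v < k -> u <= q ->
  middle_binom_sum q n u + middle_binom_sum q n v <= middle_binom_sum q n.+1 k.
Proof.
move=> q0 huv vk uq; case: k huv vk => // k huv vk.
rewrite Fpascal.
have h1 : k - v < k.+1 by lia.
have h2 : k.+1 + (k - v) < q by lia.
have := @Fconc q n k.+1 (k - v) q0 h1 h2.
have -> : k.+1 + 1 + (k - v) = u by lia.
have -> : k.+1 - 1 - (k - v) = v by lia.
have -> : k.+1 + 1 = k.+2 by lia.
by have -> : k.+1 - 1 = k by lia.
Qed.

Lemma total0 p (a : 'I_0 -> 'I_p.+1) : \sum_x hc a x = 1.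
Proof.
rewrite /hc exchange_big /=.
rewrite (eq_bigr (fun _ => 1)) ?sum1_card ?card_ffun ?card_ord ?expn0 //.
move=> e _; have hs : signed_sum a e < p.+1 by apply: ltn_pmod.
rewrite (eq_bigl (mem [set: 'I_p.+1])); last by move=> x; rewrite /= in_setT.
by rewrite (sum_eqx _ hs) in_setT.
Qed.

Lemma main1 p n (a : 'I_n -> 'I_p.+1) (P : {set 'I_p.+1}) :
  (forall i, coprime (a i) p.+1) ->
  \sum_(x in P) hc a x <= middle_binom_sum p.+1 n #|P|.
Proof.
elim: n a P => [|n IH] a P co.
  case: (posnP #|P|) => [/cards0_eq ->|hP]; first by rewrite big_set0.
  apply: (@leq_trans 1).
    rewrite -(total0 a) [X in _ <= X](bigID (mem P)) /=.
    exact: leq_addr.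
  rewrite -(F01 p) -(subnK hP); exact: Fmono.
set a' := fun i => a (lift ord_max i).
set al := a ord_max.
pose Q : {set 'I_p.+1} := (fun y => y + al)%R @^-1: P.
have co' : forall i, coprime (a' i) p.+1 by move=> i; apply: co.
rewrite (eq_bigr (fun x => hc a' x + hc a' (x - al)%R)); last by move=> x _; rewrite hc_rec.
rewrite big_split /= sum_shift -/Q sumUI.
have hQ : #|Q| = #|P| by rewrite card_preimset //; apply: addIr.
have hUI := cardsUI P Q.
have hI : #|P :&: Q| <= #|P| by apply: subset_leq_card; apply: subsetIl.
have hU : #|P :|: Q| <= p.+1 by have := max_card (mem (P :|: Q)); rewrite card_ord.
apply: (leq_trans (leq_add (IH a' _ co') (IH a' _ co'))).
case: (ltnP #|P :&: Q| #|P|) => hlt.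
  have huv : #|P :|: Q| + #|P :&: Q| = #|P| + #|P| by rewrite hUI hQ.
  exact: (@Fnum p.+1 n _ _ _ isT huv hlt hU).
have eI : P :&: Q = P by apply/eqP; rewrite eqEcard subsetIl; lia.
have eU : #|P :|: Q| = #|P| by lia.
rewrite eU eI.
case: (posnP #|P|) => [->|hP]; first by rewrite F0.
have eQ : Q = P.
  apply/eqP; rewrite eq_sym eqEcard hQ leqnn andbT.
  by apply/subsetP => x; rewrite -{1}eI inE => /andP[].
have := inv_full (co ord_max) eQ.
rewrite -card_gt0 hP => /(_ isT) eP.
rewrite eP cardsT card_ord; exact: Ftop.
Qed.

Lemma modeq_dvdz q m n : m %% q = n %% q -> (q%:Z %| (m%:Z - n%:Z)%R)%Z.
Proof. by move=> h; rewrite -eqz_mod_dvd !modz_nat h. Qed.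

Lemma hc_ones p n (x : 'I_p.+1) :
  hc (fun _ : 'I_n => (inZp 1 : 'I_p.+1)) x = binom_mod p.+1 n (val x).
Proof.
elim: n x => [|n IH] x.
  rewrite /hc (eq_bigr (fun _ => (0 == val x) : nat)); last first.
    by move=> e _; rewrite /signed_sum big_ord0.
  rewrite sum_nat_const card_ffun !card_ord expn0 mul1n bm0 dvdzE /=.
  case: (posnP (val x)) => [->|hx]; first by rewrite dvdn0.
  by rewrite gtnNdvd // eq_sym eqn0Ngt hx.
rewrite hc_rec /= !IH bm_pascal; congr (_ + _); apply: bm_period.
set w := (x - inZp 1)%R.
have -> : ((val w)%:Z - ((val x)%:Z - 1) = (val w + 1)%N%:Z - (val x)%:Z)%R by lia.
apply: modeq_dvdz.
rewrite -modnDmr.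
have -> : ((val w + 1 %% p.+1) %% p.+1 = val (w + inZp 1)%R)%N by [].
by rewrite /w subrK modn_small // ltn_ord.
Qed.

Definition res p (z : int) : 'I_p.+1 := inZp `|(z %% p.+1%:Z)%Z|%N.

Lemma res_dvd p z : (p.+1%:Z %| (z - (val (res p z))%:Z)%R)%Z.
Proof.
have h0 : (0 <= (z %% p.+1%:Z)%Z)%R by apply: modz_ge0.
have h1 : ((z %% p.+1%:Z)%Z < p.+1%:Z)%R by apply: ltz_pmod.
rewrite /res /= modn_small; last by lia.
have -> : ((`|(z %% p.+1%:Z)%Z|%N)%:Z = (z %% p.+1%:Z)%Z)%R by rewrite gez0_abs.
by rewrite {1}(divz_eq z p.+1%:Z) addrK; apply: dvdz_mull; apply: dvdzz.
Qed.

Lemma Fsum q n k : middle_binom_sum q n k = \sum_(t < k) binom_mod q n (J n t).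
Proof. by elim: k => [|k IH]; rewrite ?F0 ?big_ord0 // Fstep IH big_ord_recr. Qed.

Lemma main2 p n k : k <= p.+1 ->
  exists (a : 'I_n -> 'I_p.+1) (P : {set 'I_p.+1}),
      (forall i, coprime (a i) p.+1) /\ #|P| = k /\
      hit_count a P = middle_binom_sum p.+1 n k.
Proof.
move=> kq.
have inj : injective (fun t : 'I_k => res p (J n t)).
  move=> t t' e.
  have d : (p.+1%:Z %| (J n t - J n t')%R)%Z.
    have := rpredB (res_dvd p (J n t)) (res_dvd p (J n t')).
    by rewrite e (_ : (J n t - _ - (J n t' - _) = J n t - J n t')%R) //; lia.
  case/dvdzP: d => z hz; apply: val_inj => /=.
  have ht := ltn_ord t; have ht' := ltn_ord t'.
  have := JP n t; have := JP n t' => j1 j2.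
  case: (ltrgtP z 0) => hz0.
  - have : (z * p.+1%:Z <= - p.+1%:Z)%R by nia.
    lia.
  - have : (p.+1%:Z <= z * p.+1%:Z)%R by nia.
    lia.
  - rewrite hz0 mul0r in hz; lia.
exists (fun _ => inZp 1), [set res p (J n t) | t : 'I_k]; split; last split.
- by move=> i; rewrite /= coprime_modl coprime1n.
- by rewrite card_imset // card_ord.
rewrite hit_hc // big_imset; last by move=> t t' _ _; apply: inj.
rewrite Fsum /=; apply: eq_bigr => t _; rewrite hc_ones.
by apply/esym/bm_period/res_dvd.
Qed.

Unset Implicit Arguments.

Theorem theorem1 (q n k : nat) (hq : 0 < q) :
  (forall (a : 'I_n -> 'I_q) (P : {set 'I_q}),
      (forall i, coprime (a i) q) -> #|P| = k ->
      hit_count a P <= middle_binom_sum q n k)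
  /\
  (k <= q ->
   exists (a : 'I_n -> 'I_q) (P : {set 'I_q}),
      (forall i, coprime (a i) q) /\ #|P| = k /\
      hit_count a P = middle_binom_sum q n k).
Proof.
case: q hq => // p _; split.
  by move=> a P co <-; rewrite hit_hc //; apply: main1.
exact: main2.
Qed.
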